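(* There is an absolute constant $\delta>0$ such that the following holds. For $A\ge1$ and $y\ge1$ define \[ f_A(y)=\delta\min\Big\{\frac{\big(\operatorname{Log}_2 y-\frac{\operatorname{Log} A}{\log 4-1}\big)^2}{\operatorname{Log} A},\ \operatorname{Log} A+\operatorname{Log}_2 y\Big\}, \] and for $x>1$ let $\mathcal{S}^A_{<x}$ be the set of $n\in\mathcal{S}_{<x}$ such that \[ \tau(n_{<y})\le A\,e^{-f_A(y)}\operatorname{Log} y\quad\text{for all } y\in[1,x]. \] Then for all $A\ge1$ and $x>1$, \[ \sum_{n\in\mathcal{S}_{<x}\setminus\mathcal{S}^A_{<x}}\frac1n\ll\frac{\operatorname{Log} x}{A}, \] with an absolute implied constant.
   Context: $\operatorname{Log} x=\max\{1,\log x\}$, $\operatorname{Log}_2 x=\operatorname{Log}(\operatorname{Log} x)$. $\tau(n)$ is the number of divisors of $n$. For $x\ge1$, $\mathcal{S}_{<x}$ is the set of square-free natural numbers all of whose prime factors are $<x$ (including $1$). For $n\in\mathcal{S}_{<x}$ and $1\le y\le x$, $n_{<y}$ denotes the product of the prime factors of $n$ that are $<y$ (so $n=n_{<y}n_{\ge y}$ with $n_{\ge y}$ having all prime factors in $[y,x)$). *)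

(* Defs.v *)
From Stdlib Require Import Reals ZArith.
From mathcomp Require Import all_boot.
From mathcomp Require Import boolp.

Set Implicit Arguments.
Unset Strict Implicit.
Unset Printing Implicit Defensive.

Local Open Scope R_scope.

Definition Log (x : R) : R := Rmax 1 (ln x).
Definition Log2 (x : R) : R := Log (Log x).

Definition tau (n : nat) : nat := size (divisors n).

Definition squarefree (n : nat) : Prop :=
  (0 < n)%N /\ forall p : nat, prime p -> ~~ (p * p %| n)%N.

Definition S_lt (x : R) (n : nat) : Prop :=
  squarefree n /\ forall p : nat, prime p -> (p %| n)%N -> INR p < x.

Definition part_lt (n : nat) (y : R) : nat :=
  \prod_(p <- primes n | if Rlt_dec (INR p) y then true else false) p.

Definition fA (delta A y : R) : R :=
  delta * Rmin ((Log2 y - Log A / (ln 4 - 1)) ^ 2 / Log A) (Log A + Log2 y).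

Definition S_A_lt (delta A x : R) (n : nat) : Prop :=
  S_lt x n /\
  forall y : R, 1 <= y <= x ->
    INR (tau (part_lt n y)) <= A * exp (- fA delta A y) * Log y.

(* A bound on the elements of S_{<x}: every n in S_{<x} divides the product
   of the primes < x, hence n <= K! with K = up x (the integer > x). *)
Definition S_bound (x : R) : nat := (Z.to_nat (up x))`!.+1.

(* sum of 1/n over n in S_{<x} \ S^A_{<x} (a finite set, contained in
   [0, S_bound x)) *)
Definition exc_sum (delta A x : R) : R :=
  foldr Rplus 0
    (map (fun n : nat => / INR n)
       (filter (fun n : nat => `[< S_lt x n /\ ~ S_A_lt delta A x n >])
          (iota 0 (S_bound x)))).

(* Main.v *)
Require Import Defs.
From Stdlib Require Import Reals Lra ZArith Lia Classical.
From mathcomp Require Import all_boot zify boolp.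
Set Implicit Arguments. Unset Strict Implicit. Unset Printing Implicit Defensive.

Lemma bin_le_pow2 n k : 'C(n, k) <= 2 ^ n.
Proof.
elim: n k => [|n IH] [|k] //=.
  by rewrite bin0 expn_gt0.
rewrite binS expnS mul2n -addnn; apply: leq_add; apply: IH.
Qed.

Lemma prime_dvd_fact p j : prime p -> p %| j`! -> p <= j.
Proof.
move=> pp; elim: j => [|j IH]; first by rewrite fact0 Euclid_dvd1.
rewrite factS Euclid_dvdM // => /orP[h|h].
  by apply: dvdn_leq.
by apply: leq_trans (IH h) _.
Qed.

Fixpoint Th (n : nat) : nat :=
  if n is k.+1 then Th k * (if prime k.+1 then k.+1 else 1) else 1.

Lemma Th_gt0 n : 0 < Th n.
Proof. elim: n => //= n IH; rewrite muln_gt0 IH /=; case: ifP => // /prime_gt0. Qed.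

Lemma Th_pdvd q n : prime q -> q %| Th n -> q <= n.
Proof.
move=> pq; elim: n => [|n IH] /=; first by rewrite Euclid_dvd1.
rewrite Euclid_dvdM // => /orP[h|h]; first by apply: leq_trans (IH h) _.
case: ifP h => _ h; last by rewrite Euclid_dvd1 in h.
by apply: dvdn_leq.
Qed.

Lemma Th_dvd_binom m k : m.+1 <= k <= (m.*2).+1 ->
  Th k %| Th m.+1 * 'C((m.*2).+1, m).
Proof.
elim: k => [|k IH] /andP[h1 h2]; first by [].
have [e|ne] := eqVneq k.+1 m.+1; first by rewrite e dvdn_mulr.
have hk : m.+1 <= k <= (m.*2).+1 by apply/andP; split; lia.
rewrite /=; case: ifP => pk; last by rewrite muln1; apply: IH.
rewrite Gauss_dvd; last first.
  rewrite coprime_sym prime_coprime //; apply/negP => /(Th_pdvd pk); lia.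
rewrite IH //=; apply: dvdn_mull.
have hmn : m <= (m.*2).+1 by lia.
have hb := bin_fact hmn.
have hd : k.+1 %| ((m.*2).+1)`! by apply: dvdn_fact; lia.
move: hd; rewrite -hb Gauss_dvdl // prime_coprime // Euclid_dvdM //.
apply/negP => /orP[/(prime_dvd_fact pk)|/(prime_dvd_fact pk)]; lia.
Qed.

Lemma Th_le n : Th n <= 8 ^ n.
Proof.
elim: n {-2}n (leqnn n) => [|N IH] n hn.
  by have -> : n = 0 by lia.
case: n hn => [|n] hn; first by [].
have hoh := odd_double_half n.
case: (boolP (odd n)) hoh => od hoh.
- (* n odd: n.+1 even *)
  case: n hn od hoh => [|n] hn od hoh; first by [].
  case: n hn od hoh => [|n] hn od hoh; first by [].
  have np : ~~ prime n.+3.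
    apply/negP => pr.
    have h2 : 2 %| n.+3 by rewrite dvdn2 /= -[odd n]negbK; move: od => /= ->.
    have := (prime_nt_dvdP pr (isT : 2 != 1)) h2; lia.
  rewrite /= (negbTE np) muln1.
  apply: leq_trans (IH n.+2 _) _; first lia.
  by rewrite leq_exp2l.
- have hm : n = (n./2).*2 by move: hoh => /= hoh; lia.
  set m := n./2 in hm *.
  case: m hm => [|m] hm; first by rewrite hm.
  rewrite hm.
  have hdiv := Th_dvd_binom (m := m.+1) (k := (m.+1).*2.+1) (ltac:(apply/andP; split; lia)).
  have hpos : 0 < Th m.+2 * 'C((m.+1).*2.+1, m.+1).
    by rewrite muln_gt0 Th_gt0 bin_gt0 /=; lia.
  have h := dvdn_leq hpos hdiv.
  apply: leq_trans h _.
  apply: leq_trans (leq_mul (IH m.+2 ltac:(lia)) (bin_le_pow2 _ _)) _.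
  have e : 8 ^ (m.+1).*2.+1 = 8 ^ m.+2 * 8 ^ m.+1 by rewrite -expnD; congr (_ ^ _); lia.
  rewrite e; apply: leq_mul => //.
  have -> : 8 ^ m.+1 = 2 ^ (3 * m.+1) by rewrite expnM.
  rewrite leq_exp2l //; lia.
Qed.


Fixpoint PP (N M : nat) : nat :=
  if M is k.+1 then PP N k * (if prime k.+1 then k.+1 ^ (N %/ k.+1) else 1) else 1.

Lemma PP_gt0 N M : 0 < PP N M.
Proof.
elim: M => //= M IH; rewrite muln_gt0 IH /=; case: ifP => // /prime_gt0 h.
by rewrite expn_gt0 h.
Qed.

Lemma PP_pdvd N q M : prime q -> q %| PP N M -> q <= M.
Proof.
move=> pq; elim: M => [|M IH] /=; first by rewrite Euclid_dvd1.
rewrite Euclid_dvdM // => /orP[h|h]; first by apply: leq_trans (IH h) _.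
case: ifP h => _ h; last by rewrite Euclid_dvd1 in h.
rewrite Euclid_dvdX // in h; case/andP: h => h _.
by apply: dvdn_leq.
Qed.

Lemma PP_dvd_fact N M : PP N M %| N`!.
Proof.
elim: M => [|M IH] /=; first by rewrite dvd1n.
case: ifP => pk; last by rewrite muln1.
rewrite Gauss_dvd; last first.
  rewrite coprime_sym; apply: coprimeXl; rewrite prime_coprime //.
  by apply/negP => /(PP_pdvd pk); rewrite ltnn.
rewrite IH /=.
case: N {IH} => [|N]; first by rewrite div0n expn0 dvd1n.
rewrite pfactor_dvdn ?fact_gt0 // logn_fact // big_ltn //.
by rewrite expn1 leq_addr.
Qed.

Lemma fact_le_pow n : n`! <= n ^ n.
Proof.
elim: n => // n IH; rewrite factS expnS leq_mul2l /=.
apply: leq_trans IH _; case: n => // n; rewrite leq_exp2r //.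
Qed.

Local Open Scope R_scope.

Lemma natRM m n : INR (m * n)%N = INR m * INR n.
Proof. exact: mult_INR. Qed.
Lemma natRD m n : INR (m + n)%N = INR m + INR n.
Proof. exact: plus_INR. Qed.
Lemma natRX m n : INR (m ^ n)%N = INR m ^ n.
Proof. elim: n => [|n IH]; first by rewrite expn0. by rewrite expnS natRM IH /=. Qed.

Lemma ln_le_R x y : 0 < x -> x <= y -> ln x <= ln y.
Proof. move=> hx [h|->]; [left; apply: ln_increasing | right] => //. Qed.

Lemma natR_gt0 n : (0 < n)%N -> 0 < INR n.
Proof. move=> h; apply: lt_0_INR; apply/ltP. done. Qed.

Lemma natR_le m n : (m <= n)%N -> INR m <= INR n.
Proof. by move=> h; apply: le_INR; apply/leP. Qed.

Fixpoint Sl (M : nat) : R :=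
  if M is k.+1 then Sl k + (if prime k.+1 then ln (INR k.+1) / INR k.+1 else 0) else 0.

Lemma SlS k : Sl k.+1 = Sl k + (if prime k.+1 then ln (INR k.+1) / INR k.+1 else 0).
Proof. by []. Qed.
Lemma ThS k : Th k.+1 = (Th k * (if prime k.+1 then k.+1 else 1))%N.
Proof. by []. Qed.
Lemma PPS N k : PP N k.+1 = (PP N k * (if prime k.+1 then k.+1 ^ (N %/ k.+1) else 1))%N.
Proof. by []. Qed.

Lemma Sl_key N M : INR N * Sl M - ln (INR (Th M)) <= ln (INR (PP N M)).
Proof.
elim: M => [|M IH].
  rewrite /= ln_1; lra.
rewrite SlS ThS PPS; case: ifP => pk; last first.
  by rewrite !muln1; lra.
have p0 : 0 < INR M.+1 by apply: natR_gt0.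
have hT := Th_gt0 M; have hP := PP_gt0 N M.
have t0 : 0 < INR (Th M) := natR_gt0 hT.
have q0 : 0 < INR (PP N M) := natR_gt0 hP.
have e0 : 0 < INR (M.+1 ^ (N %/ M.+1)) by apply: natR_gt0; rewrite expn_gt0.
rewrite !natRM ln_mult // ln_mult //.
rewrite natRX ln_pow //.
have hlp : 0 <= ln (INR M.+1).
  rewrite -ln_1; apply: ln_le_R; first lra.
  by apply: (@natR_le 1).
have hd : INR N / INR M.+1 - 1 <= INR (N %/ M.+1).
  have e := divn_eq N M.+1.
  have hm := ltn_pmod N (ltn0Sn M).
  have : INR N <= INR (N %/ M.+1) * INR M.+1 + INR M.+1.
    rewrite -natRM -natRD; apply: natR_le; lia.
  move=> h; apply/(Rmult_le_reg_r (INR M.+1)) => //.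
  rewrite Rmult_minus_distr_r /Rdiv Rmult_assoc Rinv_l; lra.
have : (INR N / INR M.+1 - 1) * ln (INR M.+1) <= INR (N %/ M.+1) * ln (INR M.+1).
  by apply: Rmult_le_compat_r.
rewrite /Rdiv; nra.
Qed.

Lemma Sl_bound N : (0 < N)%N -> Sl N <= ln (INR N) + ln 8.
Proof.
move=> hN.
have k := Sl_key N N.
have n0 : 0 < INR N := natR_gt0 hN.
have h1 : ln (INR (PP N N)) <= INR N * ln (INR N).
  rewrite -ln_pow //; apply: ln_le_R; first by apply: natR_gt0; apply: PP_gt0.
  rewrite -natRX; apply: natR_le.
  apply: leq_trans (fact_le_pow N); apply: dvdn_leq; [exact: fact_gt0 | exact: PP_dvd_fact].
have h2 : ln (INR (Th N)) <= INR N * ln 8.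
  rewrite -ln_pow; last lra.
  apply: ln_le_R; first by apply: natR_gt0; apply: Th_gt0.
  rewrite (_ : 8 = INR 8); last by rewrite /=; lra.
  rewrite -natRX; apply: natR_le; apply: Th_le.
have : INR N * Sl N <= INR N * (ln (INR N) + ln 8) by lra.
move=> h; apply: (Rmult_le_reg_l (INR N)) => //.
Qed.

Fixpoint Sp (M : nat) : R :=
  if M is k.+1 then Sp k + (if prime k.+1 then / INR k.+1 else 0) else 0.
Lemma SpS k : Sp k.+1 = Sp k + (if prime k.+1 then / INR k.+1 else 0).
Proof. by []. Qed.

Lemma ln_ratio a b : 0 < a -> 0 < b -> 1 - a / b <= ln b - ln a.
Proof.
move=> ha hb.
have h := exp_ineq1_le (ln (a / b)).
rewrite exp_ln in h; last by apply: Rdiv_lt_0_compat.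
rewrite /Rdiv ln_mult ?ln_Rinv in h; try lra; try apply: Rinv_0_lt_compat; lra.
Qed.

Lemma ln2_pos : 0 < ln 2.
Proof. rewrite -ln_1; apply: ln_increasing; lra. Qed.

Lemma lnN_pos N : (2 <= N)%N -> ln 2 <= ln (INR N).
Proof. move=> h; apply: ln_le_R; first lra. by apply: (@natR_le 2). Qed.

Definition c8 := ln 8.
Lemma c8_pos : 0 < c8.
Proof. rewrite /c8 -ln_1; apply: ln_increasing; lra. Qed.

Lemma T_bound N : (2 <= N)%N ->
  Sp N - Sl N / ln (INR N) <=
  ln (ln (INR N)) - ln (ln 2) + c8 / ln 2 - c8 / ln (INR N).
Proof.
elim: N => [//|N IH] hN.
have [e|hN2] := eqVneq N 1%N.
  subst N; rewrite /=.
  have l2 := ln2_pos.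
  rewrite (_ : 1 + 1 = 2); last lra.
  rewrite (_ : (0 + 0 + ln 2 / 2) / ln 2 = / 2); last by field; lra.
  lra.
have hN' : (2 <= N)%N by lia.
have {}IH := IH hN'.
have l2 := ln2_pos.
have lN := lnN_pos hN'.
have lN1 := lnN_pos hN.
have hlt : ln (INR N) < ln (INR N.+1).
  apply: ln_increasing; first by apply: natR_gt0; lia.
  rewrite S_INR; lra.
have hSl := Sl_bound (ltac:(lia) : (0 < N)%N).
have hSl0 : 0 <= Sl N.
  clear -N; elim: N => [|N IH]; first by rewrite /=; lra.
  rewrite SlS; case: ifP => _; last lra.
  have : 0 <= ln (INR N.+1) / INR N.+1.
    apply: Rmult_le_pos; last by left; apply: Rinv_0_lt_compat; apply: natR_gt0.
    rewrite -ln_1; apply: ln_le_R; first lra; by apply: (@natR_le 1).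
  lra.
have eT : Sp N.+1 - Sl N.+1 / ln (INR N.+1) =
          Sp N - Sl N / ln (INR N.+1).
  rewrite SpS SlS; case: ifP => _; last by rewrite !Rplus_0_r.
  have hp : INR N.+1 <> 0 by apply: not_0_INR.
  have hq : ln (INR N.+1) <> 0 by lra.
  field; split; assumption.
rewrite eT.
have hr := ln_ratio (ltac:(lra) : 0 < ln (INR N)) (ltac:(lra) : 0 < ln (INR N.+1)).
have hd : 0 <= / ln (INR N) - / ln (INR N.+1).
  suff : / ln (INR N.+1) <= / ln (INR N) by lra.
  apply: Rinv_le_contravar; lra.
have : Sl N * (/ ln (INR N) - / ln (INR N.+1)) <=
       (ln (INR N) + c8) * (/ ln (INR N) - / ln (INR N.+1)).
  apply: Rmult_le_compat_r => //; rewrite /c8; lra.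
have e1 : ln (INR N) * (/ ln (INR N) - / ln (INR N.+1)) = 1 - ln (INR N) / ln (INR N.+1).
  field; lra.
rewrite /Rdiv in IH hr e1 *.
nra.
Qed.

Definition B0 := 1 - ln (ln 2) + c8 / ln 2.

Lemma Sp_bound N : (2 <= N)%N -> Sp N <= ln (ln (INR N)) + B0.
Proof.
move=> hN.
have T := T_bound hN.
have lN := lnN_pos hN. have l2 := ln2_pos.
have hSl := Sl_bound (ltac:(lia) : (0 < N)%N).
have : Sl N / ln (INR N) <= (ln (INR N) + c8) / ln (INR N).
  apply: Rmult_le_compat_r; last by rewrite /c8; lra.
  by left; apply: Rinv_0_lt_compat; lra.
have e : (ln (INR N) + c8) / ln (INR N) = 1 + c8 / ln (INR N) by field; lra.
rewrite /B0; lra.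
Qed.

Lemma B0_pos : 0 <= B0.
Proof.
rewrite /B0.
have l2 := ln2_pos.
have : ln 2 < 1.
  rewrite -(ln_exp 1); apply: ln_increasing; first lra.
  have := exp_ineq1 1 ltac:(lra); lra.
move=> h.
have : ln (ln 2) < 0 by rewrite -ln_1; apply: ln_increasing.
have := c8_pos.
move=> hc hl.
have : 0 < c8 / ln 2 by apply: Rdiv_lt_0_compat.
lra.
Qed.

Lemma Sp_nonneg N : 0 <= Sp N.
Proof.
elim: N => [|N IH]; first by rewrite /=; lra.
rewrite SpS; case: ifP => _; last lra.
have : 0 < / INR N.+1 by apply: Rinv_0_lt_compat; apply: natR_gt0.
lra.
Qed.

Definition sumR (l : seq nat) (f : nat -> R) : R := foldr (fun q acc => f q + acc) 0 l.

Lemma sumR_cons q l f : sumR (q :: l) f = f q + sumR l f.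
Proof. by []. Qed.

Lemma sumR_rem x l f : x \in l -> sumR l f = f x + sumR (rem x l) f.
Proof.
elim: l => [//|y l IH]; rewrite inE /= => /orP[/eqP->|h].
  by rewrite eqxx.
case: eqP => [->//|_]; rewrite /= IH //; lra.
Qed.

Lemma sumR_ge0 l f : (forall q, q \in l -> 0 <= f q) -> 0 <= sumR l f.
Proof.
elim: l => [|y l IH] h /=; first lra.
have h1 := h y (mem_head _ _).
have h2 : 0 <= sumR l f by apply: IH => q hq; apply: h; rewrite inE hq orbT.
lra.
Qed.

Lemma sumR_subset l1 l2 f : uniq l1 -> uniq l2 -> {subset l1 <= l2} ->
  (forall q, q \in l2 -> 0 <= f q) -> sumR l1 f <= sumR l2 f.
Proof.
elim: l1 l2 => [|x l1 IH] l2 u1 u2 hs hf.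
  by rewrite /=; apply: sumR_ge0.
have xl2 : x \in l2 by apply: hs; rewrite mem_head.
rewrite (sumR_rem f xl2) sumR_cons.
case/andP: u1 => nx u1.
suff : sumR l1 f <= sumR (rem x l2) f by lra.
apply: IH => //; first by apply: rem_uniq.
  move=> q hq; rewrite (mem_rem_uniq _ u2) inE; apply/andP; split.
    by apply/eqP => e; rewrite -e hq in nx.
  by apply: hs; rewrite inE hq orbT.
move=> q hq; apply: hf; exact: (mem_rem hq).
Qed.

Lemma sum_le_Sp M l : uniq l -> (forall q, q \in l -> prime q /\ (q <= M)%N) ->
  sumR l (fun q => / INR q) <= Sp M.
Proof.
elim: M l => [|M IH] l ul hl.
  case: l ul hl => [|q l] ul hl; first by rewrite /=; lra.
  by have [/prime_gt0 h1 h2] := hl q (mem_head _ _); lia.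
rewrite SpS.
have [inl|ninl] := boolP (M.+1 \in l).
  rewrite (sumR_rem _ inl).
  have [pr _] := hl _ inl; rewrite pr.
  suff : sumR (rem M.+1 l) (fun q => / INR q) <= Sp M by lra.
  apply: IH; first by apply: rem_uniq.
  move=> q; rewrite (mem_rem_uniq _ ul) inE => /andP[hq ql].
  have [pq qM] := hl q ql; split => //; move/eqP: hq; lia.
have : sumR l (fun q => / INR q) <= Sp M.
  apply: IH => // q ql; have [pq qM] := hl q ql; split => //.
  have : q != M.+1 by apply/eqP => e; rewrite -e ql in ninl.
  move/eqP; lia.
case: ifP => _; last lra.
have : 0 < / INR M.+1 by apply: Rinv_0_lt_compat; apply: natR_gt0.
lra.
Qed.

Lemma floor_ex y : 0 <= y -> exists M : nat, INR M <= y < INR M + 1.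
Proof.
move=> hy.
have [h1 h2] := archimed y.
have hz : (0 <= up y - 1)%Z.
  have : (0 < up y)%Z by apply: lt_IZR; lra.
  lia.
exists (Z.to_nat (up y - 1)).
rewrite INR_IZR_INZ Z2Nat.id // minus_IZR /=; lra.
Qed.

Lemma Log_ge1 y : 1 <= Log y.
Proof. rewrite /Log; apply: Rmax_l. Qed.

Lemma lnLog_ge0 y : 0 <= ln (Log y).
Proof. rewrite -ln_1; apply: ln_le_R; [lra | apply: Log_ge1]. Qed.

Lemma Mert_real y l : 1 <= y -> uniq l ->
  (forall q, q \in l -> prime q /\ INR q < y) ->
  sumR l (fun q => / INR q) <= ln (Log y) + B0.
Proof.
move=> hy ul hl.
have [M [hM1 hM2]] := floor_ex (ltac:(lra) : 0 <= y).
have hlM : forall q, q \in l -> prime q /\ (q <= M)%N.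
  move=> q ql; have [pq qy] := hl q ql; split => //.
  have : INR q < INR M.+1 by rewrite S_INR; lra.
  by move/INR_lt/ltP.
have h := sum_le_Sp ul hlM.
have B := B0_pos. have L0 := lnLog_ge0 y.
case: (leqP 2 M) => hM.
  have := Sp_bound hM.
  have : ln (ln (INR M)) <= ln (Log y).
    have l2 := ln2_pos; have lN := lnN_pos hM.
    apply: ln_le_R; first lra.
    apply: Rle_trans (Rmax_r 1 (ln y)).
    apply: ln_le_R => //; apply: natR_gt0; lia.
  lra.
case: l ul hl hlM h => [|q l] ul hl hlM h; first by rewrite /=; lra.
have [/prime_gt1 h1 h2] := hlM q (mem_head _ _); lia.
Qed.

Local Open Scope R_scope.

Definition ind (P : Prop) : R := if `[< P >] then 1 else 0.

Lemma ind_ge0 P : 0 <= ind P.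
Proof. rewrite /ind; case: ifP => _; lra. Qed.
Lemma ind_le1 P : ind P <= 1.
Proof. rewrite /ind; case: ifP => _; lra. Qed.
Lemma ind_T (P : Prop) : P -> ind P = 1.
Proof. by move=> h; rewrite /ind asboolT. Qed.
Lemma ind_F (P : Prop) : ~ P -> ind P = 0.
Proof. by move=> h; rewrite /ind asboolF. Qed.
Lemma ind_imp (P Q : Prop) : (P -> Q) -> ind P <= ind Q.
Proof.
move=> h; rewrite /ind; case: (asboolP P) => hp; case: (asboolP Q) => hq; try lra.
by case: hq; apply: h.
Qed.

Fixpoint SS (ps : seq nat) (F : nat -> R) : R :=
  match ps with
  | [::] => F 1%N
  | p :: ps' => SS ps' F + SS ps' (fun n => F (p * n)%N)
  end.

Definition hasPr (ps : seq nat) (n : nat) : Prop :=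
  forall q, prime q -> (q %| n)%N -> q \in ps.

Lemma SS_le_in ps F G : all prime ps ->
  (forall n, hasPr ps n -> F n <= G n) -> SS ps F <= SS ps G.
Proof.
elim: ps F G => [|p ps IH] F G /= hps h.
  apply: h => q pq; rewrite dvdn1 => /eqP e; rewrite e in pq.
  by [].
case/andP: hps => pp hps.
apply: Rplus_le_compat; apply: IH => // n hn; apply: h => q pq.
  by move=> /(hn q pq) qi; rewrite inE qi orbT.
rewrite Euclid_dvdM // => /orP[h1|h1].
  by rewrite (dvdn_prime2 pq pp) in h1; rewrite inE h1.
by rewrite inE (hn q pq h1) orbT.
Qed.

Lemma SS_plus ps F G : SS ps (fun n => F n + G n) = SS ps F + SS ps G.
Proof. elim: ps F G => [|p ps IH] F G //=; rewrite !IH; lra. Qed.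

Lemma SS_scal ps k F : SS ps (fun n => k * F n) = k * SS ps F.
Proof. elim: ps F => [|p ps IH] F //=; rewrite !IH; lra. Qed.

Lemma SS_ge0 ps F : (forall n, 0 <= F n) -> 0 <= SS ps F.
Proof.
elim: ps F => [|p ps IH] F h //=.
have := IH F h; have := IH (fun n => F (p * n)%N) (fun n => h _); lra.
Qed.

Lemma SS_ext ps F G : (forall n, F n = G n) -> SS ps F = SS ps G.
Proof.
elim: ps F G => [|p ps IH] F G h //=.
by rewrite (IH F G h) (IH (fun n => F (p * n)%N) (fun n => G (p * n)%N)).
Qed.

Definition prodR (l : seq nat) (g : nat -> R) : R := foldr (fun q acc => g q * acc) 1 l.

Lemma SS_inv ps : SS ps (fun n => / INR n) = prodR ps (fun p => 1 + / INR p).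
Proof.
elim: ps => [|p ps IH] /=; first lra.
rewrite (@SS_ext ps (fun n => / INR (p * n)%N) (fun n => / INR p * / INR n)); last first.
  by move=> n; rewrite natRM Rinv_mult.
rewrite SS_scal IH; lra.
Qed.

Lemma sumR_split l f (a : pred nat) :
  sumR l f = sumR (filter a l) f + sumR (filter (predC a) l) f.
Proof. elim: l => [|q l IH] /=; first lra. case: (a q) => /=; rewrite IH; lra. Qed.

Lemma sumR_map l f g : sumR (map g l) f = sumR l (fun n => f (g n)).
Proof. by elim: l => [|q l IH] //=; rewrite IH. Qed.

Lemma sumR_ext_in l f g : (forall n, n \in l -> f n = g n) -> sumR l f = sumR l g.
Proof.
elim: l => [|q l IH] h //=; rewrite h ?mem_head // IH // => n hn.
by apply: h; rewrite inE hn orbT.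
Qed.

Lemma sqf_dvd m n : squarefree n -> (m %| n)%N -> squarefree m.
Proof.
move=> [n0 hn] hd; split.
  by case: m hd => //; rewrite dvd0n => /eqP h; move: n0; rewrite h.
move=> p pp; apply/negP => h; move: (hn p pp) => /negP; apply.
exact: dvdn_trans h hd.
Qed.

Lemma list_le_SS ps : all prime ps -> uniq ps -> forall l F,
  uniq l -> (forall n, n \in l -> squarefree n /\ hasPr ps n) ->
  (forall n, 0 <= F n) -> sumR l F <= SS ps F.
Proof.
elim: ps => [|p ps IH] hpr ups l F ul hl hF.
  rewrite /=.
  have h1 : forall n, n \in l -> n = 1%N.
    move=> n nl; have [[n0 _] hp] := hl n nl.
    have [->//|hn] : n = 1%N \/ (1 < n)%N by lia.
    by have := hp (pdiv n) (pdiv_prime hn) (pdiv_dvd n).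
  case: l ul hl h1 => [|a l] ul hl h1 /=; first by apply: hF.
  have ea := h1 a (mem_head _ _).
  case: l ul hl h1 => [|b l] ul hl h1 /=; first by rewrite ea; lra.
  have eb := h1 b (ltac:(by rewrite !inE eqxx orbT)).
  by move: ul; rewrite /= ea eb inE eqxx.
case/andP: hpr => pp hpr; case/andP: ups => pnps ups.
rewrite /= (@sumR_split l F (fun n => p %| n)%N) [X in X <= _]Rplus_comm.
apply: Rplus_le_compat.
  apply: IH => //; first by apply: filter_uniq.
  move=> n; rewrite mem_filter /= => /andP[pn nl]; have [sq hp] := hl n nl.
  split => // q pq qn; have := hp q pq qn; rewrite inE => /orP[/eqP e|] //.
  by rewrite -e qn in pn.
set l1 := filter _ l.
have e1 : sumR l1 F = sumR (map (fun n => n %/ p)%N l1) (fun m => F (p * m)%N).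
  rewrite sumR_map; apply: sumR_ext_in => n; rewrite mem_filter => /andP[pn _].
  by rewrite mulnC divnK.
rewrite e1; apply: IH => //.
- rewrite map_inj_in_uniq; first by apply: filter_uniq.
  move=> u v; rewrite !mem_filter => /andP[pu _] /andP[pv _] e.
  by rewrite -(divnK pu) -(divnK pv) e.
- move=> m /mapP[n]; rewrite mem_filter => /andP[pn nl] ->.
  have [sq hp] := hl n nl.
  have dm : (n %/ p %| n)%N by apply: dvdn_div.
  split; first by apply: sqf_dvd dm.
  move=> q pq qm; have := hp q pq (dvdn_trans qm dm); rewrite inE => /orP[/eqP e|//].
  case: sq => _ hsq; move: (hsq p pp) => /negP; case.
  rewrite -[X in (_ %| X)%N](divnK pn) dvdn_pmul2r ?prime_gt0 //.
  by move: qm; rewrite e.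
Qed.

Definition ltb (q : nat) (y : R) : bool := if Rlt_dec (INR q) y then true else false.

Definition PR (l : seq nat) (y : R) (h : nat -> R) : R :=
  foldr (fun q acc => (if ltb q y then h q else 1) * acc) 1 l.

Definition ef (a : R) (q : nat) : R := 1 + (a - 1) / (INR q + 1).
Definition gfac (a : R) (n q : nat) : R := (if (q %| n)%N then a else 1) / ef a q.

Lemma PR_one l y h : (forall q, q \in l -> ~ INR q < y) -> PR l y h = 1.
Proof.
elim: l => [//|q l IH] hl /=.
rewrite IH; last by move=> r hr; apply: hl; rewrite inE hr orbT.
rewrite /ltb; destruct (Rlt_dec (INR q) y) as [h1|h1]; rewrite /=; last lra.
by case: (hl q (mem_head _ _)).
Qed.

Lemma PR_ext l y h1 h2 : (forall q, q \in l -> h1 q = h2 q) -> PR l y h1 = PR l y h2.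
Proof.
elim: l => [//|q l IH] hl /=.
rewrite IH; last by move=> r hr; apply: hl; rewrite inE hr orbT.
by rewrite hl ?mem_head.
Qed.

Lemma prodR_ge1 ps : all prime ps -> 1 <= prodR ps (fun p => 1 + / INR p).
Proof.
elim: ps => [|p ps IH] /=; first lra.
case/andP=> pp hps.
have := IH hps.
have : 0 < / INR p by apply: Rinv_0_lt_compat; apply: natR_gt0; apply: prime_gt0.
move=> h1 h2.
nra.
Qed.

Lemma ef_pos a q : 1 <= a -> 0 < ef a q.
Proof.
move=> ha; rewrite /ef.
have : 0 <= (a - 1) / (INR q + 1).
  apply: Rmult_le_pos; first lra.
  apply: Rlt_le; apply: Rinv_0_lt_compat; have := pos_INR q; lra.
lra.
Qed.

Lemma inv_natR_ge0 n : 0 <= / INR n.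
Proof.
case: n => [|n]; first by rewrite /= Rinv_0; lra.
by apply: Rlt_le; apply: Rinv_0_lt_compat; apply: natR_gt0.
Qed.

Lemma SS_cons p ps F : SS (p :: ps) F = SS ps F + SS ps (fun n => F (p * n)%N).
Proof. by []. Qed.
Lemma prodR_cons p ps g : prodR (p :: ps) g = g p * prodR ps g.
Proof. by []. Qed.

Lemma doob ps a lam : sorted ltn ps -> all prime ps -> 1 <= a -> 0 < lam ->
  forall c, 0 <= c ->
  SS ps (fun n => ind (exists y, lam <= c * PR ps y (gfac a n)) * / INR n)
  <= c / lam * prodR ps (fun p => 1 + / INR p).
Proof.
move=> + + ha hl.
elim: ps => [|p ps IH] hs hpr c hc.
  rewrite /= Rinv_1 Rmult_1_r.
  case: (Rle_lt_dec lam c) => h.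
    apply: Rle_trans (ind_le1 _) _.
    have : 1 <= c / lam.
      apply: (Rmult_le_reg_r lam) => //; rewrite /Rdiv Rmult_assoc Rinv_l; lra.
    lra.
  rewrite ind_F; last by case=> y; lra.
  have : 0 <= c / lam by apply: Rmult_le_pos => //; apply: Rlt_le; apply: Rinv_0_lt_compat.
  lra.
have hpr' := hpr; case/andP: hpr' => pp hps.
have hs' : sorted ltn ps := path_sorted hs.
have hmin : forall q, q \in ps -> (p < q)%N.
  move=> q hq; have := order_path_min ltn_trans hs; move/allP; apply.
  exact: hq.
have p0 : 0 < INR p by apply: natR_gt0; apply: prime_gt0.
have hP1 := prodR_ge1 hps.
have hef := ef_pos p ha.
case: (Rle_lt_dec lam c) => hcl.
  apply: (@Rle_trans _ (SS (p :: ps) (fun n => / INR n))).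

    apply: SS_le_in => // n _.
    have := ind_le1 (exists y, lam <= c * PR (p :: ps) y (gfac a n)).
    have := inv_natR_ge0 n; nra.
  rewrite SS_inv.
  have : 1 <= c / lam.
    apply: (Rmult_le_reg_r lam) => //; rewrite /Rdiv Rmult_assoc Rinv_l; lra.
  have := prodR_ge1 hpr; nra.
set G := fun p => 1 + / INR p.
have hinv : forall n : nat, 0 <= / INR n := inv_natR_ge0.
have pnd : forall n, hasPr ps n -> ~~ (p %| n)%N.
  move=> n hn; apply/negP => pn; have := hmin p (hn p pp pn); by rewrite ltnn.
have step1 : SS ps (fun n => ind (exists y, lam <= c * PR (p :: ps) y (gfac a n)) * / INR n)
   <= SS ps (fun n => ind (exists y, lam <= (c / ef a p) * PR ps y (gfac a n)) * / INR n).
  apply: SS_le_in => // n hn; apply: Rmult_le_compat_r => //; apply: ind_imp.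
  case=> y hy; exists y; move: hy; rewrite /= /ltb.
  destruct (Rlt_dec (INR p) y) as [h1|h1]; rewrite /=.
    by rewrite /gfac (negbTE (pnd n hn)) /Rdiv Rmult_1_l -Rmult_assoc.
  rewrite PR_one; first lra.
  move=> q hq; have := hmin q hq; move/ltP/lt_INR; lra.
have step2 : SS ps (fun n => ind (exists y, lam <= c * PR (p :: ps) y (gfac a (p * n)%N)) * / INR (p * n)%N)
   <= / INR p * SS ps (fun n => ind (exists y, lam <= (c * a / ef a p) * PR ps y (gfac a n)) * / INR n).
  rewrite -SS_scal; apply: SS_le_in => // n hn.
  rewrite natRM Rinv_mult.
  have hp := Rlt_le _ _ (Rinv_0_lt_compat _ p0).
  suff : ind (exists y, lam <= c * PR (p :: ps) y (gfac a (p * n)%N)) <=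
         ind (exists y, lam <= (c * a / ef a p) * PR ps y (gfac a n)).
    have := hinv n; have := ind_ge0 (exists y, lam <= c * PR (p :: ps) y (gfac a (p * n)%N)).
    move=> h1 h2 h3; have hpn : 0 <= / INR p * / INR n by apply: Rmult_le_pos.
    have h4 := Rmult_le_compat_r _ _ _ hpn h3; lra.
  apply: ind_imp; case=> y hy; exists y; move: hy; rewrite /= /ltb.
  have eP : PR ps y (gfac a (p * n)%N) = PR ps y (gfac a n).
    apply: PR_ext => q hq; rewrite /gfac Euclid_dvdM ?(allP hps q hq) //.
    rewrite dvdn_prime2 ?(allP hps q hq) //.
    have : q != p by apply/eqP => e; have := hmin q hq; rewrite e ltnn.
    by move/negbTE => ->.
  destruct (Rlt_dec (INR p) y) as [h1|h1]; rewrite /= eP.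
    by rewrite /gfac (dvdn_mulr _ (dvdnn p)) /Rdiv; move=> h; apply: Rle_trans h _; right; ring.
  rewrite PR_one; first lra.
  move=> q hq; have := hmin q hq; move/ltP/lt_INR; lra.
have c1 : 0 <= c / ef a p by apply: Rmult_le_pos => //; apply: Rlt_le; apply: Rinv_0_lt_compat.
have c2 : 0 <= c * a / ef a p.
  apply: Rmult_le_pos; [apply: Rmult_le_pos; lra | apply: Rlt_le; apply: Rinv_0_lt_compat => //].
have i1 := IH hs' hps _ c1.
have i2 := IH hs' hps _ c2.
rewrite SS_cons prodR_cons.
have eq : c / ef a p / lam * prodR ps G + / INR p * (c * a / ef a p / lam * prodR ps G)
        = c / lam * ((1 + / INR p) * prodR ps G).
  have hid : 1 + a / INR p = ef a p * (1 + / INR p).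
    rewrite /ef; field; lra.
  have e1 : c / ef a p / lam * prodR ps G + / INR p * (c * a / ef a p / lam * prodR ps G)
     = c / ef a p / lam * prodR ps G * (1 + a / INR p) by field; lra.
  rewrite e1 hid; field; lra.
have hsum : forall u v, u <= v -> / INR p * u <= / INR p * v.
  move=> u v huv; apply: Rmult_le_compat_l => //; apply: Rlt_le; apply: Rinv_0_lt_compat => //.
have := hsum _ _ i2.
rewrite /G in eq *.
lra.
Qed.

Local Close Scope R_scope.

Lemma tau_mulp p m : prime p -> ~~ (p %| m) -> 0 < m -> tau (p * m) = (2 * tau m)%N.
Proof.
move=> pp npm m0.
have p0 := prime_gt0 pp.
have pm0 : 0 < p * m by rewrite muln_gt0 p0.
rewrite /tau.
have hperm : perm_eq (divisors (p * m)) (divisors m ++ map (muln p) (divisors m)).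
  apply: uniq_perm; first exact: divisors_uniq.
    rewrite cat_uniq divisors_uniq map_inj_uniq; last by move=> u v /eqP; rewrite eqn_pmul2l // => /eqP.
    rewrite divisors_uniq andbT /=.
    apply/hasPn => d /mapP[e ed ->]; rewrite -dvdn_divisors //.
    apply/negP => h; move: npm; rewrite (dvdn_trans (dvdn_mulr _ (dvdnn p)) h) //.
  move=> d; rewrite mem_cat -!dvdn_divisors //.
  apply/idP/idP.
    move=> h; have [pd|npd] := boolP (p %| d).
      apply/orP; right; apply/mapP; exists (d %/ p).
        rewrite -dvdn_divisors // -(dvdn_pmul2l p0) (mulnC p) divnK //.
      by rewrite mulnC divnK.
    apply/orP; left; move: h; rewrite Gauss_dvdr //.
    by rewrite coprime_sym prime_coprime.
  case/orP=> [h|/mapP[e]]; first by apply: dvdn_mull.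
  by rewrite -dvdn_divisors // => h ->; rewrite dvdn_pmul2l.
by rewrite (perm_size hperm) size_cat size_map addnn -mul2n.
Qed.

Lemma prime_dvd_prod p l : prime p -> (p %| \prod_(q <- l) q)%N -> exists2 q, q \in l & (p %| q)%N.
Proof.
move=> pp; elim: l => [|q l IH]; first by rewrite big_nil Euclid_dvd1.
rewrite big_cons Euclid_dvdM // => /orP[h|/IH[r rl h]].
  by exists q => //; rewrite mem_head.
by exists r => //; rewrite inE rl orbT.
Qed.

Lemma tau_prod l : uniq l -> all prime l -> tau (\prod_(q <- l) q) = (2 ^ size l)%N.
Proof.
elim: l => [|p l IH]; first by rewrite big_nil.
case/andP=> pl ul /andP[pp pr].
rewrite big_cons tau_mulp //; first by rewrite IH // expnS.
  apply/negP => /(prime_dvd_prod pp)[q ql].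
  rewrite dvdn_prime2 // ?(allP pr q ql) // => /eqP e.
  by rewrite e ql in pl.
rewrite big_seq; apply: prodn_cond_gt0 => i /(allP pr)/prime_gt0. done.
Qed.

Lemma tau_part n y : (0 < n)%N ->
  tau (part_lt n y) = (2 ^ count (fun q => ltb q y) (primes n))%N.
Proof.
move=> n0; rewrite /part_lt.
rewrite -(big_filter _ (fun q => ltb q y)) /= tau_prod.
- by rewrite size_filter.
- by apply: filter_uniq; apply: primes_uniq.
apply/allP => q; rewrite mem_filter mem_primes => /andP[_ /andP[]] //.
Qed.

Lemma count_ps n y ps : uniq ps -> all prime ps -> (0 < n)%N -> hasPr ps n ->
  count (fun q => ltb q y && (q %| n)%N) ps = count (fun q => ltb q y) (primes n).
Proof.
move=> ups pps n0 hn.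
rewrite -count_filter.
have hp : perm_eq (filter (fun q => q %| n)%N ps) (primes n).
  apply: uniq_perm; [by apply: filter_uniq | by apply: primes_uniq | ].
  move=> q; rewrite mem_filter mem_primes n0 /=.
  apply/idP/idP.
    by case/andP=> h1 h2; rewrite h1 (allP pps q h2).
  by case/andP=> h1 h2; rewrite h2 (hn q h1 h2).
by rewrite (permP hp).
Qed.

Local Open Scope R_scope.

Lemma ltbP q y : ltb q y = true <-> INR q < y.
Proof.
rewrite /ltb; destruct (Rlt_dec (INR q) y); split => //.
Qed.

Lemma powRD a m n : a ^ (m + n)%N = a ^ m * a ^ n.
Proof. exact: pow_add. Qed.

Lemma PR_decomp ps y a n : 1 <= a ->
  PR ps y (gfac a n) * PR ps y (ef a) = a ^ count (fun q => ltb q y && (q %| n)%N) ps.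
Proof.
move=> ha; elim: ps => [|q ps IH] /=; first lra.
have hef := ef_pos q ha.
rewrite powRD -IH.
case: (ltb q y) => /=; last by rewrite /=; ring.
have e : ef a q <> 0 by lra.
rewrite /gfac; case: (q %| n)%N => /=; field; exact e.
Qed.

Lemma PR_ef_pos ps y a : 1 <= a -> 0 < PR ps y (ef a).
Proof.
move=> ha; elim: ps => [|q ps IH] /=; first lra.
have hef := ef_pos q ha.
case: (ltb q y); apply: Rmult_lt_0_compat => //; lra.
Qed.

Lemma PR_ef_bound ps y a : 1 <= a -> all prime ps ->
  PR ps y (ef a) <= exp ((a - 1) * sumR (filter (fun q => ltb q y) ps) (fun q => / INR q)).
Proof.
move=> ha; elim: ps => [|q ps IH] /=; first by rewrite Rmult_0_r exp_0; lra.
case/andP=> pq hps.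
have q0 : 0 < INR q by apply: natR_gt0; apply: prime_gt0.
have IH' := IH hps.
have hP := PR_ef_pos ps y ha.
case: (ltb q y) => /=; last lra.
rewrite Rmult_plus_distr_l exp_plus.
apply: Rmult_le_compat => //.
- by apply: Rlt_le; apply: ef_pos.
- apply: Rlt_le; exact: hP.
rewrite /ef.
have : (a - 1) / (INR q + 1) <= (a - 1) * / INR q.
  apply: Rmult_le_compat_l; first lra.
  apply: Rinv_le_contravar => //; lra.
have := exp_ineq1_le ((a - 1) * / INR q).
lra.
Qed.

Local Open Scope R_scope.

Definition c0 := ln 4 - 1.

Lemma ln4 : ln 4 = 2 * ln 2.
Proof. rewrite (_ : 4 = 2 * 2); last lra. rewrite ln_mult; lra. Qed.

Lemma ln2_lt1 : ln 2 < 1.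
Proof.
rewrite -(ln_exp 1); apply: ln_increasing; first lra.
have := exp_ineq1 1 ltac:(lra); lra.
Qed.

Lemma ln2_gt : 3 / 5 < ln 2.
Proof.
have h1 : exp (1/5) <= 5/4.
  have h := exp_ineq1_le (- (1/5)).
  rewrite exp_Ropp in h.
  have hp := exp_pos (1/5).
  apply: (Rmult_le_reg_r (/ exp (1/5))); first by apply: Rinv_0_lt_compat.
  rewrite Rinv_r; last lra.
  lra.
have h3 : exp (3/5) = exp (1/5) * exp (1/5) * exp (1/5).
  by rewrite -!exp_plus; f_equal; lra.
have hp := exp_pos (1/5).
have : exp (3/5) < 2 by rewrite h3; nra.
move=> h; rewrite -(ln_exp (3/5)); apply: ln_increasing => //; apply: exp_pos.
Qed.

Lemma c0_bounds : 1/5 <= c0 <= 1.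
Proof. rewrite /c0 ln4; have := ln2_gt; have := ln2_lt1; lra. Qed.

Lemma exp_quad z : z <= 1/2 -> exp z <= 1 + z + 2 * z ^ 2.
Proof.
move=> hz.
have h := exp_ineq1_le (- z).
rewrite exp_Ropp in h.
have hp := exp_pos z.
have h1 : (1 - z) * exp z <= 1.
  have := Rmult_le_compat_r (exp z) _ _ (Rlt_le _ _ hp) h.
  by rewrite Rinv_l; lra.
have h2 : 0 <= z ^ 2 * (1 - 2 * z) by apply: Rmult_le_pos; [apply: pow2_ge_0 | lra].
have h3 : (1 - z) * (1 + z + 2 * z ^ 2) = 1 + z ^ 2 * (1 - 2 * z) by ring.
have h4 : 0 < 1 - z by lra.
nra.
Qed.

Definition aa (s : R) := exp (s * ln 2).

Lemma aa_ge1 s : 0 <= s -> 1 <= aa s.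
Proof.
move=> hs; rewrite /aa -exp_0; have l2 := ln2_pos.
have : 0 <= s * ln 2 by apply: Rmult_le_pos; lra.
case=> h; [left; apply: exp_increasing | right; rewrite h] => //.
Qed.

Lemma aa_le4 s : s <= 2 -> aa s <= 4.
Proof.
move=> hs; rewrite /aa; have l2 := ln2_pos.
have : s * ln 2 <= ln 4 by rewrite ln4; nra.
case=> h; last by rewrite h exp_ln; lra.
left; rewrite -(exp_ln 4); last lra. by apply: exp_increasing.
Qed.

Lemma aa_quad sg : - (1/8) <= sg <= 1/8 ->
  aa (1 + sg) - 1 - (1 + sg) <= c0 * sg + 4 * sg ^ 2.
Proof.
move=> hs; rewrite /aa Rmult_plus_distr_r Rmult_1_l exp_plus exp_ln; last lra.
have l2 := ln2_pos; have l1 := ln2_lt1.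
have hz : sg * ln 2 <= 1/2 by nra.
have := exp_quad hz.
rewrite /c0 ln4.
have : (sg * ln 2) ^ 2 <= sg ^ 2.
  rewrite Rpow_mult_distr; have := pow2_ge_0 sg.
  have : ln 2 ^ 2 <= 1 by nra.
  nra.
nra.
Qed.

Lemma aa_half : aa (1/2) <= 14143 / 10000.
Proof.
rewrite /aa.
have e : exp (1/2 * ln 2) * exp (1/2 * ln 2) = 2.
  by rewrite -exp_plus (_ : 1/2 * ln 2 + 1/2 * ln 2 = ln 2) ?exp_ln; lra.
have := exp_pos (1/2 * ln 2).
nra.
Qed.

Definition dlt : R := 1 / 25000.

Lemma Log_ge1' y : 1 <= Log y.
Proof. exact: Log_ge1. Qed.

Lemma Log2_ge1 y : 1 <= Log2 y.
Proof. exact: Log_ge1. Qed.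

Lemma lnLog_le_Log2 y : ln (Log y) <= Log2 y.
Proof. rewrite /Log2 /Log; apply: Rmax_r. Qed.

Lemma Log2_le_lnLog y : Log2 y - 1 <= ln (Log y).
Proof.
rewrite /Log2 {1}/Log.
have := lnLog_ge0 y.
case: (Rle_lt_dec 1 (ln (Log y))) => h.
  rewrite Rmax_right //; lra.
rewrite Rmax_left; lra.
Qed.

Lemma lnA_bounds A : 1 <= A -> 0 <= ln A /\ ln A <= Log A /\ Log A - 1 <= ln A.
Proof.
move=> hA.
have h0 : 0 <= ln A by rewrite -ln_1; apply: ln_le_R; lra.
split => //; split; first by rewrite /Log; apply: Rmax_r.
rewrite /Log; case: (Rle_lt_dec 1 (ln A)) => h.
  rewrite Rmax_right //; lra.
rewrite Rmax_left; lra.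
Qed.

Lemma fA_props A y : 1 <= A ->
  0 <= fA dlt A y /\
  fA dlt A y <= dlt * ((Log2 y - Log A / c0) ^ 2 / Log A) /\
  fA dlt A y <= dlt * (Log A + Log2 y).
Proof.
move=> hA; rewrite /fA -/c0.
have hL := Log_ge1 A; have ht := Log2_ge1 y.
have hd : 0 < dlt by rewrite /dlt; lra.
have q0 : 0 <= (Log2 y - Log A / c0) ^ 2 / Log A.
  apply: Rmult_le_pos; [apply: pow2_ge_0 | apply: Rlt_le; apply: Rinv_0_lt_compat; lra].
split; last split.
- apply: Rmult_le_pos; first lra.
  apply: Rmin_glb; lra.
- apply: Rmult_le_compat_l; [lra | apply: Rmin_l].
- apply: Rmult_le_compat_l; [lra | apply: Rmin_r].
Qed.

Definition cond (s g A y : R) : Prop :=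
  ln A + g <= s * (ln A - fA dlt A y + Log2 y - 1) - (aa s - 1) * (Log2 y + B0).

Lemma cond_right A y : 1 <= A -> 7 * Log A <= Log2 y -> cond (1/2) (- 1 - B0) A y.
Proof.
move=> hA ht; rewrite /cond.
have [l0 [l1 l2]] := lnA_bounds hA.
have [f0 [f1 f2]] := fA_props y hA.
have hB := B0_pos.
have ha := aa_half.
have ha1 := aa_ge1 (ltac:(lra) : 0 <= 1/2).
have ht1 := Log2_ge1 y.
set t := Log2 y in ht f1 f2 ht1 *.
set L := Log A in ht l1 l2 f1 f2 *.
set f := fA dlt A y in f0 f1 f2 *.
set a := aa (1/2) in ha ha1 *.
have e1 : (a - 1) * (t + B0) <= 4143 / 10000 * t + B0.
  have : (a - 1) * t <= 4143/10000 * t by apply: Rmult_le_compat_r; lra.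
  have : (a - 1) * B0 <= B0 by nra.
  lra.
rewrite /dlt in f2.
lra.
Qed.

Definition kap : R := c0 / 56.
Definition gam : R := c0 ^ 2 / 224.
Definition thk (A : R) (k : nat) : R := kap * INR k / sqrt (Log A).
Definition smid (A : R) (k : nat) (sg : R) : R := 1 + (- sg * thk A k).
Definition gmid (k : nat) : R := gam * INR k ^ 2 - 3 - 3 * B0.

Lemma cond_mid A y k sg : 1 <= A -> Log2 y <= 7 * Log A -> (sg = 1 \/ sg = -1) ->
  INR k * sqrt (Log A) <= sg * (Log2 y - Log A / c0) < (INR k + 1) * sqrt (Log A) ->
  cond (smid A k sg) (gmid k) A y.
Proof.
move=> hA ht hsg [hk1 hk2]; rewrite /cond /smid /gmid.
have [l0 [l1 l2]] := lnA_bounds hA.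
have [f0 [f1 f2]] := fA_props y hA.
have hB := B0_pos.
have [c0l c0u] := c0_bounds.
have ht1 := Log2_ge1 y.
have hL := Log_ge1 A.
have sL : 0 < sqrt (Log A) by apply: sqrt_lt_R0; lra.
have sL2 : sqrt (Log A) * sqrt (Log A) = Log A by apply: sqrt_sqrt; lra.
have sg2 : sg * sg = 1 by case: hsg => ->; lra.
set t := Log2 y in ht f1 f2 ht1 hk1 hk2 *.
set L := Log A in ht l1 l2 f1 f2 hL sL sL2 hk1 hk2 *.
set f := fA dlt A y in f0 f1 f2 *.
set r := sqrt L in sL sL2 hk1 hk2 *.
set u := t - L / c0 in hk1 hk2 f1 *.
set kk := INR k in hk1 hk2 *.
have k0 : 0 <= kk by apply: pos_INR.
set v := sg * u in hk1 hk2.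
have hu : u = sg * v by rewrite /v -Rmult_assoc sg2 Rmult_1_l.
have Lc : L / c0 <= 5 * L.
  apply: (Rmult_le_reg_r c0); first lra.
  rewrite /Rdiv Rmult_assoc Rinv_l; nra.
have Lc0 : 0 <= L / c0 by apply: Rmult_le_pos; [lra | apply: Rlt_le; apply: Rinv_0_lt_compat; lra].
have v7 : v <= 7 * L.
  case: hsg => e; rewrite /v /u e; lra.
have kr : kk <= 7 * r.
  have : kk * r <= 7 * r * r by nra.
  move=> h; apply: (Rmult_le_reg_r r) => //.
set th := thk A k.
have thE : th * r = kap * kk by rewrite /th /thk -/L -/r -/kk; field; lra.
have th0 : 0 <= th.
  rewrite /th /thk /kap; apply: Rmult_le_pos; last by apply: Rlt_le; apply: Rinv_0_lt_compat.
  apply: Rmult_le_pos => //; lra.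
have th8 : th <= 1/8.
  have : th * r <= 1/8 * r by rewrite thE /kap; nra.
  move=> h; apply: (Rmult_le_reg_r r) => //.
set sgm := - sg * th.
have sgm_b : - th <= sgm <= th by rewrite /sgm; case: hsg => ->; lra.
have sgm2 : sgm ^ 2 = th ^ 2 by rewrite /sgm; ring_simplify; rewrite -[sg ^ 2]/(sg * (sg * 1)) Rmult_1_r sg2; ring.
have Fa := aa_quad (ltac:(lra) : - (1/8) <= sgm <= 1/8).
have a4 := aa_le4 (ltac:(lra) : 1 + sgm <= 2).
have a1 := aa_ge1 (ltac:(lra) : 0 <= 1 + sgm).
set a := aa (1 + sgm) in Fa a4 a1 *.
have F_at : (a - 1 - (1 + sgm)) * t <= (c0 * sgm + 4 * sgm ^ 2) * t.
  by apply: Rmult_le_compat_r; lra.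
have F_sl : sgm * ln A >= sgm * L - th.
  have : sgm * (ln A - L) >= - th by nra.
  lra.
have F_sf : sgm * f <= f by nra.
have F_c : sgm * L - c0 * sgm * t = - c0 * sgm * u by rewrite /u; field; lra.
have F_6 : - c0 * sgm * u = c0 * th * v by rewrite /sgm hu; ring_simplify; rewrite -[sg ^ 2]/(sg * (sg * 1)) Rmult_1_r sg2; ring.
have F_7 : c0 * th * v >= c0 ^ 2 / 56 * kk ^ 2.
  have : th * v >= th * (kk * r) by apply: Rle_ge; apply: Rmult_le_compat_l.
  have : th * (kk * r) = kap * kk ^ 2 by rewrite -Rmult_assoc (Rmult_comm th) Rmult_assoc thE; ring.
  rewrite /kap => e1 h1.
  have : c0 * (th * v) >= c0 * (c0 / 56 * kk ^ 2) by apply: Rle_ge; apply: Rmult_le_compat_l; lra.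
  move=> h2; rewrite Rmult_assoc; apply: Rle_ge; apply: Rle_trans (Rge_le _ _ h2).
  right; rewrite /Rdiv; ring.
have F_8 : sgm ^ 2 * t <= c0 ^ 2 / 448 * kk ^ 2.
  rewrite sgm2.
  have : th ^ 2 * t <= th ^ 2 * (7 * L) by apply: Rmult_le_compat_l; [apply: pow2_ge_0 | lra].
  have : th ^ 2 * L = kap ^ 2 * kk ^ 2 by rewrite -sL2; transitivity ((th * r) ^ 2); [ring | rewrite thE; ring].
  move=> e1 h1.
  have e2 : th ^ 2 * (7 * L) = 7 * (th ^ 2 * L) by ring.
  rewrite e2 e1 in h1; apply: Rle_trans h1 _; right; rewrite /kap; field.
have F_9 : f <= dlt * (2 * kk ^ 2 + 2).
  apply: Rle_trans f1 _; apply: Rmult_le_compat_l; first by rewrite /dlt; lra.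
  have : u ^ 2 = v ^ 2 by rewrite hu; ring_simplify; rewrite -[sg ^ 2]/(sg * (sg * 1)) Rmult_1_r sg2; ring.
  move=> e; rewrite e.
  have v0 : 0 <= v by nra.
  have : v ^ 2 <= ((kk + 1) * r) ^ 2 by nra.
  have : ((kk + 1) * r) ^ 2 = (kk + 1) ^ 2 * L by rewrite -sL2; ring.
  move=> e2 h; rewrite e2 in h.
  have : v ^ 2 / L <= (kk + 1) ^ 2.
    apply: (Rmult_le_reg_r L); first lra.
    rewrite /Rdiv Rmult_assoc Rinv_l; lra.
  move=> h3; have := pow2_ge_0 (kk - 1); nra.
have F_aB : a * B0 <= 4 * B0 by nra.
have F_c0 : c0 ^ 2 * kk ^ 2 >= kk ^ 2 / 25.
  have : c0 ^ 2 >= 1 / 25 by nra.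
  have := pow2_ge_0 kk; nra.
rewrite /gam /dlt in F_9 *.
lra.
Qed.

Local Open Scope R_scope.

Lemma exp_pow_nat x k : exp x ^ k = exp (INR k * x).
Proof.
elim: k => [|k IH]; first by rewrite /= Rmult_0_l exp_0.
rewrite [exp x ^ k.+1]/= IH S_INR -exp_plus; f_equal; ring.
Qed.

Lemma exp_le x y : x <= y -> exp x <= exp y.
Proof. by case=> h; [left; apply: exp_increasing | right; rewrite h]. Qed.

Lemma bridge A y s g ps n : 1 <= A -> 1 <= y -> 0 < s -> s <= 2 ->
  uniq ps -> all prime ps -> hasPr ps n -> (0 < n)%N ->
  A * exp (- fA dlt A y) * Log y < INR (tau (part_lt n y)) ->
  cond s g A y ->
  exp (ln A + g) <= PR ps y (gfac (aa s) n).
Proof.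
move=> hA hy s0 s2 ups pps hn n0 hbad hc.
set a := aa s.
have a1 : 1 <= a by apply: aa_ge1; lra.
set k := count (fun q => ltb q y && (q %| n)%N) ps.
have htau : tau (part_lt n y) = (2 ^ k)%N by rewrite tau_part // -(count_ps y ups pps n0 hn).
have hdec := PR_decomp ps y n a1.
have hpos := PR_ef_pos ps y a1.
have hS : sumR (filter (fun q => ltb q y) ps) (fun q => / INR q) <= ln (Log y) + B0.
  apply: Mert_real => //; first by apply: filter_uniq.
  move=> q; rewrite mem_filter => /andP[h1 h2]; split; first exact: (allP pps q h2).
  by apply/ltbP.
have hef := @PR_ef_bound ps y a a1 pps.
have ht := lnLog_le_Log2 y.
have ht2 := Log2_le_lnLog y.
set t := Log2 y in ht ht2 hc.
have hef2 : PR ps y (ef a) <= exp ((a - 1) * (t + B0)).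
  apply: Rle_trans hef _; apply: exp_le; apply: Rmult_le_compat_l; lra.
have hak : a ^ k = exp (INR k * (s * ln 2)) by rewrite /a /aa exp_pow_nat.
have hLy := Log_ge1 y.
have hf := fA_props y hA.
have hT0 : 0 < A * exp (- fA dlt A y) * Log y.
  apply: Rmult_lt_0_compat; [apply: Rmult_lt_0_compat; [lra | apply: exp_pos] | lra].
have hln : ln (A * exp (- fA dlt A y) * Log y) < ln (INR (tau (part_lt n y))).
  by apply: ln_increasing.
rewrite htau natRX ln_pow /= in hln; last lra.
rewrite ln_mult ?ln_mult ?ln_exp in hln; try lra; try apply: exp_pos;
  try (apply: Rmult_lt_0_compat; [lra | apply: exp_pos]).
have hk : s * (ln A - fA dlt A y + t - 1) <= s * (INR k * ln 2).
  rewrite (_ : 1 + 1 = 2) in hln; last lra.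
  apply: Rmult_le_compat_l; lra.
rewrite /cond -/t -/a in hc.
have : exp (ln A + g) * exp ((a - 1) * (t + B0)) <= a ^ k.
  rewrite -exp_plus hak; apply: exp_le; lra.
rewrite -hdec.
have e0 := exp_pos (ln A + g).
move=> h.
have h2 : exp (ln A + g) * PR ps y (ef a) <= PR ps y (gfac a n) * PR ps y (ef a).
  apply: Rle_trans h; apply: Rmult_le_compat_l; lra.
apply: (Rmult_le_reg_r (PR ps y (ef a))) => //.
Qed.

Fixpoint fsum (K : nat) (h : nat -> R) : R :=
  if K is K'.+1 then fsum K' h + h K' else 0.

Lemma fsum_ge0 K h : (forall k, 0 <= h k) -> 0 <= fsum K h.
Proof. elim: K => [|K IH] hh /=; first lra. have := IH hh; have := hh K; lra. Qed.

Lemma fsum_ge_term K h k : (k < K)%N -> (forall k, 0 <= h k) -> h k <= fsum K h.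
Proof.
elim: K => [//|K IH] hk hh /=.
have [e|ne] := eqVneq k K.
  by rewrite e; have := fsum_ge0 K hh; lra.
have := IH (ltac:(lia)) hh; have := hh K; lra.
Qed.

Lemma fsum_le K h1 h2 : (forall k, h1 k <= h2 k) -> fsum K h1 <= fsum K h2.
Proof. elim: K => [|K IH] hh /=; first lra. have := IH hh; have := hh K; lra. Qed.

Lemma fsum_mulr K h c : fsum K h * c = fsum K (fun k => h k * c).
Proof. elim: K => [|K IH] /=; first ring. rewrite -IH; ring. Qed.

Lemma SS_zero ps : SS ps (fun _ => 0) = 0.
Proof. elim: ps => [|p ps IH] //=; rewrite IH; ring. Qed.

Lemma SS_fsum ps K h : SS ps (fun n => fsum K (fun k => h k n)) = fsum K (fun k => SS ps (h k)).
Proof.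
elim: K => [|K IH] /=; first by apply: SS_zero.
by rewrite SS_plus IH.
Qed.

Lemma fsum_geom K q : 0 <= q < 1 -> fsum K (fun k => q ^ k) <= / (1 - q).
Proof.
move=> hq.
have e : forall K, fsum K (fun k => q ^ k) * (1 - q) = 1 - q ^ K.
  elim=> [|K' IH] /=; first ring.
  rewrite Rmult_plus_distr_r IH; ring.
have hK := e K.
have p0 : 0 <= q ^ K by apply: pow_le; lra.
apply: (Rmult_le_reg_r (1 - q)); first lra.
rewrite hK Rinv_l; lra.
Qed.

Lemma prodR_exp ps : all prime ps -> prodR ps (fun p => 1 + / INR p) <= exp (sumR ps (fun q => / INR q)).
Proof.
elim: ps => [|p ps IH] /=; first by rewrite exp_0; lra.
case/andP=> pp hps.
rewrite exp_plus; apply: Rmult_le_compat.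
- have : 0 < / INR p by apply: Rinv_0_lt_compat; apply: natR_gt0; apply: prime_gt0.
  lra.
- have := prodR_ge1 hps; lra.
- exact: exp_ineq1_le.
- exact: IH.
Qed.

Lemma thk_le A k : 1 <= A -> INR k * sqrt (Log A) <= 7 * Log A -> 0 <= thk A k <= 1/8.
Proof.
move=> hA hk.
have hL := Log_ge1 A.
have [c0l c0u] := c0_bounds.
have sL : 0 < sqrt (Log A) by apply: sqrt_lt_R0; lra.
have sL2 : sqrt (Log A) * sqrt (Log A) = Log A by apply: sqrt_sqrt; lra.
have k0 := pos_INR k.
have kr : INR k <= 7 * sqrt (Log A).
  apply: (Rmult_le_reg_r (sqrt (Log A))) => //; nra.
rewrite /thk /kap.
have e : c0 / 56 * INR k / sqrt (Log A) = c0 / 56 * (INR k / sqrt (Log A)) by rewrite /Rdiv; ring.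
rewrite e.
have h1 : INR k / sqrt (Log A) <= 7.
  apply: (Rmult_le_reg_r (sqrt (Log A))) => //.
  rewrite /Rdiv Rmult_assoc Rinv_l; lra.
have h0 : 0 <= INR k / sqrt (Log A).
  apply: Rmult_le_pos => //; apply: Rlt_le; apply: Rinv_0_lt_compat => //.
split; nra.
Qed.

Definition ER (A : R) (ps : seq nat) (n : nat) : Prop :=
  exists y, exp (ln A + (- 1 - B0)) <= 1 * PR ps y (gfac (aa (1/2)) n).
Definition EM (A : R) (ps : seq nat) (k : nat) (sg : R) (n : nat) : Prop :=
  exists y, exp (ln A + gmid k) <= 1 * PR ps y (gfac (aa (smid A k sg)) n).

Lemma select A ps K n y : 1 <= A -> 1 <= y -> uniq ps -> all prime ps -> hasPr ps n ->
  (0 < n)%N -> 7 * sqrt (Log A) < INR K ->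
  A * exp (- fA dlt A y) * Log y < INR (tau (part_lt n y)) ->
  ER A ps n \/ exists k, (k < K)%N /\ (EM A ps k 1 n \/ EM A ps k (-1) n).
Proof.
move=> hA hy ups pps hn n0 hK hbad.
have hL := Log_ge1 A.
have [c0l c0u] := c0_bounds.
have sL : 0 < sqrt (Log A) by apply: sqrt_lt_R0; lra.
have sL2 : sqrt (Log A) * sqrt (Log A) = Log A by apply: sqrt_sqrt; lra.
have ht1 := Log2_ge1 y.
case: (Rle_lt_dec (7 * Log A) (Log2 y)) => ht.
  left; exists y; rewrite Rmult_1_l.
  apply: (bridge (s := 1/2)) => //; try lra.
  exact: cond_right.
right.
have Lc : Log A / c0 <= 5 * Log A.
  apply: (Rmult_le_reg_r c0); first lra.
  rewrite /Rdiv Rmult_assoc Rinv_l; nra.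
have Lc0 : 0 <= Log A / c0 by apply: Rmult_le_pos; [lra | apply: Rlt_le; apply: Rinv_0_lt_compat; lra].
set u := Log2 y - Log A / c0.
have key : forall sg, (sg = 1 \/ sg = -1) -> 0 <= sg * u -> sg * u <= 7 * Log A ->
    exists k, (k < K)%N /\ EM A ps k sg n.
  move=> sg hsg v0 v7.
  have [k [hk1 hk2]] := floor_ex (Rmult_le_pos _ _ v0 (Rlt_le _ _ (Rinv_0_lt_compat _ sL))).
  have hk1' : INR k * sqrt (Log A) <= sg * u.
    apply: Rle_trans (Rmult_le_compat_r _ _ _ (Rlt_le _ _ sL) hk1) _.
    right; field; lra.
  have hk2' : sg * u < (INR k + 1) * sqrt (Log A).
    have := Rmult_lt_compat_r _ _ _ sL hk2.
    rewrite /Rdiv Rmult_assoc Rinv_l; lra.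
  exists k; split.
    have : INR k < INR K.
      apply: Rle_lt_trans hK.
      apply: (Rmult_le_reg_r (sqrt (Log A))) => //; nra.
    by move/INR_lt/ltP.
  exists y; rewrite Rmult_1_l.
  have hth := thk_le hA (ltac:(lra) : INR k * sqrt (Log A) <= 7 * Log A).
  apply: (bridge (s := smid A k sg)) => //.
  - rewrite /smid; case: hsg => ->; lra.
  - rewrite /smid; case: hsg => ->; lra.
  - apply: cond_mid; [done | lra | exact: hsg | split; assumption].
case: (Rle_lt_dec 0 u) => hu.
  have [k [hk hE]] := key 1 (or_introl erefl) ltac:(lra) ltac:(rewrite /u; lra).
  by exists k; split => //; left.
have [k [hk hE]] := key (-1) (or_intror erefl) ltac:(lra) ltac:(rewrite /u; lra).
by exists k; split => //; right.
Qed.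

Local Open Scope R_scope.

Lemma foldr_sumR l f : foldr Rplus 0 (map f l) = sumR l f.
Proof. by elim: l => [|a l IH] //=; rewrite IH. Qed.

Definition Bad (A x : R) (n : nat) : Prop :=
  exists y, (1 <= y <= x) /\ A * exp (- fA dlt A y) * Log y < INR (tau (part_lt n y)).

Lemma notSA_bad A x n : S_lt x n -> ~ S_A_lt dlt A x n -> Bad A x n.
Proof.
move=> hS hn.
apply: NNPP => hb; apply: hn; split => // y hy.
apply: Rnot_lt_le => hl; apply: hb; exists y; split => //.
Qed.

Lemma step_A A x ps : uniq ps -> all prime ps ->
  (forall q, prime q -> INR q < x -> q \in ps) ->
  exc_sum dlt A x <= SS ps (fun n => ind (Bad A x n) * / INR n).
Proof.
move=> ups pps hps.
rewrite /exc_sum foldr_sumR.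
set l := filter _ _.
have hl : forall n, n \in l -> S_lt x n /\ ~ S_A_lt dlt A x n.
  by move=> n; rewrite mem_filter => /andP[/asboolP h _].
rewrite (@sumR_ext_in l (fun n => / INR n) (fun n => ind (Bad A x n) * / INR n)); last first.
  move=> n nl; have [h1 h2] := hl n nl; rewrite ind_T ?Rmult_1_l //.
  exact: notSA_bad.
apply: list_le_SS => //.
- by apply: filter_uniq; apply: iota_uniq.
- move=> n nl; have [[sq hq] _] := hl n nl; split => // q pq qn.
  by apply: hps => //; apply: hq.
- move=> n; apply: Rmult_le_pos; [apply: ind_ge0 | apply: inv_natR_ge0].
Qed.

Lemma step_B A x ps K : 1 <= A -> uniq ps -> all prime ps ->
  7 * sqrt (Log A) < INR K ->
  SS ps (fun n => ind (Bad A x n) * / INR n) <=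
  SS ps (fun n => ind (ER A ps n) * / INR n) +
  fsum K (fun k => SS ps (fun n => ind (EM A ps k 1 n) * / INR n) +
                   SS ps (fun n => ind (EM A ps k (-1) n) * / INR n)).
Proof.
move=> hA ups pps hK.
set h := fun k n => ind (EM A ps k 1 n) * / INR n + ind (EM A ps k (-1) n) * / INR n.
apply: (@Rle_trans _ (SS ps (fun n => ind (ER A ps n) * / INR n + fsum K (fun k => h k n)))).
  apply: SS_le_in => // n hn.
  case: n hn => [|n] hn.
    rewrite /= Rinv_0 Rmult_0_r.
    apply: Rplus_le_le_0_compat; first by rewrite Rmult_0_r; lra.
    apply: fsum_ge0 => k; rewrite /h /= Rinv_0 !Rmult_0_r; lra.
  have hinv : 0 <= / INR n.+1 := inv_natR_ge0 n.+1.
  have hh : forall k, 0 <= h k n.+1.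
    move=> k; rewrite /h; apply: Rplus_le_le_0_compat; apply: Rmult_le_pos => //; apply: ind_ge0.
  have hR0 : 0 <= ind (ER A ps n.+1) * / INR n.+1 by apply: Rmult_le_pos => //; apply: ind_ge0.
  have hF := fsum_ge0 K hh.
  have [hb|nb] := pselect (Bad A x n.+1); last first.
    by rewrite ind_F // Rmult_0_l; lra.
  rewrite ind_T // Rmult_1_l.
  case: hb => y [[y1 y2] hy].
  case: (select hA y1 ups pps hn (ltn0Sn n) hK hy) => [hR|[k [hk hE]]].
    by rewrite ind_T // Rmult_1_l; lra.
  have := fsum_ge_term hk hh.
  rewrite /h; case: hE => hE.
    rewrite (ind_T hE) Rmult_1_l.
    have := Rmult_le_pos _ _ (ind_ge0 (EM A ps k (-1) n.+1)) hinv; lra.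
  rewrite (ind_T hE) Rmult_1_l.
  have := Rmult_le_pos _ _ (ind_ge0 (EM A ps k 1 n.+1)) hinv; lra.
rewrite SS_plus SS_fsum; apply: Rplus_le_compat_l.
by apply: fsum_le => k; rewrite /h SS_plus; lra.
Qed.

Lemma inv_exp_lnA A g : 1 <= A -> 1 / exp (ln A + g) = exp (- g) / A.
Proof.
move=> hA; rewrite exp_plus exp_ln; last lra.
rewrite exp_Ropp; have := exp_pos g; move=> h; field; lra.
Qed.

Lemma gam_pos : 0 < gam.
Proof. rewrite /gam; have [h1 h2] := c0_bounds; nra. Qed.

Lemma fsum_le_lt K h1 h2 : (forall k, (k < K)%N -> h1 k <= h2 k) -> fsum K h1 <= fsum K h2.
Proof.
elim: K => [|K IH] hh /=; first lra.
have := IH (fun k hk => hh k (ltnW hk)); have := hh K (ltnSn K); lra.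
Qed.

Lemma fsum_scal K h c : fsum K (fun k => c * h k) = c * fsum K h.
Proof. elim: K => [|K IH] /=; first ring. rewrite IH; ring. Qed.

Lemma natR_sq k : INR k <= INR k ^ 2.
Proof.
case: k => [|k]; first by rewrite /=; lra.
have := pos_INR k; rewrite S_INR; nra.
Qed.

Theorem proposition5p1 :
  exists delta : R, 0 < delta /\
  exists C : R, 0 < C /\
  forall A x : R, 1 <= A -> 1 < x ->
    exc_sum delta A x <= C * Log x / A.
Proof.
exists dlt; split; first by rewrite /dlt; lra.
set qg := exp (- gam).
have hg := gam_pos.
have q0 : 0 < qg := exp_pos _.
have q1 : qg < 1 by rewrite /qg -exp_0; apply: exp_increasing; lra.
set C1 := exp (1 + B0) + 2 * exp (3 + 3 * B0) * / (1 - qg).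
have C1p : 0 < C1.
  have := exp_pos (1 + B0); have := exp_pos (3 + 3 * B0).
  have : 0 < / (1 - qg) by apply: Rinv_0_lt_compat; lra.
  rewrite /C1; nra.
exists (C1 * exp B0); split; first by apply: Rmult_lt_0_compat => //; apply: exp_pos.
move=> A x hA hx.
have hL := Log_ge1 A.
have [K0 [hK0a hK0]] := floor_ex (Rmult_le_pos 7 _ ltac:(lra) (sqrt_pos (Log A))).
set K := K0.+1.
have hK : 7 * sqrt (Log A) < INR K by rewrite /K S_INR.
set ps := filter (fun r => prime r && ltb r x) (iota 0 (Z.to_nat (up x))).
have ups : uniq ps by apply: filter_uniq; apply: iota_uniq.
have pps : all prime ps by apply/allP => q; rewrite mem_filter => /andP[/andP[]].
have sps : sorted ltn ps by apply: sorted_filter => //; [apply: ltn_trans | apply: iota_ltn_sorted].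
have hps : forall q, prime q -> INR q < x -> q \in ps.
  move=> q pq qx; rewrite mem_filter pq /=.
  apply/andP; split; first by apply/ltbP.
  rewrite mem_iota /= add0n.
  have [h1 _] := archimed x.
  have hz : (0 <= up x)%Z by apply: le_IZR; lra.
  have : INR q < INR (Z.to_nat (up x)) by rewrite [INR (Z.to_nat _)]INR_IZR_INZ Z2Nat.id //; lra.
  by move/INR_lt/ltP.
set P := prodR ps (fun p => 1 + / INR p).
have hP1 : 1 <= P := prodR_ge1 pps.
have hPx : P <= Log x * exp B0.
  apply: Rle_trans (prodR_exp pps) _.
  have : sumR ps (fun q => / INR q) <= ln (Log x) + B0.
    apply: Mert_real => //; first lra.
    by move=> q; rewrite mem_filter => /andP[/andP[pq /ltbP h] _].
  move=> h; apply: Rle_trans (exp_le h) _.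
  rewrite exp_plus exp_ln; first lra.
  have := Log_ge1 x; lra.
have ha12 : 1 <= aa (1/2) by apply: aa_ge1; lra.
have dR := @doob ps (aa (1/2)) (exp (ln A + (- 1 - B0))) sps pps
   ha12 (exp_pos _) 1 (Rle_0_1).
have dM : forall k sg, (sg = 1 \/ sg = -1) -> (INR k * sqrt (Log A) <= 7 * Log A) ->
   SS ps (fun n => ind (EM A ps k sg n) * / INR n) <=
   1 / exp (ln A + gmid k) * P.
  move=> k sg hsg hk.
  have [t0 t1] := thk_le hA hk.
  have hs : 0 <= smid A k sg by rewrite /smid; case: hsg => ->; lra.
  exact: (@doob ps (aa (smid A k sg)) (exp (ln A + gmid k)) sps pps
          (aa_ge1 hs) (exp_pos _) 1 Rle_0_1).
have hA' := @step_A A x ps ups pps hps.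
have hB := @step_B A x ps K hA ups pps hK.
have dR' : SS ps (fun n => ind (ER A ps n) * / INR n) <= 1 / exp (ln A + (- 1 - B0)) * P := dR.
rewrite inv_exp_lnA // in dR'.
have hF : fsum K (fun k => SS ps (fun n => ind (EM A ps k 1 n) * / INR n) +
                   SS ps (fun n => ind (EM A ps k (-1) n) * / INR n))
     <= fsum K (fun k => (2 * exp (3 + 3 * B0) / A * P) * qg ^ k).
  apply: fsum_le_lt => k hk.
  have hk7 : INR k * sqrt (Log A) <= 7 * Log A.
    have : INR k <= INR K0 by apply: natR_le; rewrite /K in hk; lia.
    have s0 := sqrt_pos (Log A).
    have sL2 : sqrt (Log A) * sqrt (Log A) = Log A by apply: sqrt_sqrt; lra.
    move=> h; have := hK0a.
    nra.
  have d1 := dM k 1 (or_introl erefl) hk7.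
  have d2 := dM k (-1) (or_intror erefl) hk7.
  rewrite inv_exp_lnA // in d1 d2.
  have e : exp (- gmid k) <= exp (3 + 3 * B0) * qg ^ k.
    rewrite /qg exp_pow_nat -exp_plus; apply: exp_le.
    rewrite /gmid; have := natR_sq k; nra.
  have hA0 : 0 < / A by apply: Rinv_0_lt_compat; lra.
  have : exp (- gmid k) / A * P <= exp (3 + 3 * B0) * qg ^ k / A * P.
    apply: Rmult_le_compat_r; first lra.
    apply: Rmult_le_compat_r; lra.
  rewrite /Rdiv in d1 d2 *; lra.
have hG := fsum_geom K (conj (Rlt_le _ _ q0) q1).
rewrite fsum_scal in hF.
have hPp : 0 <= 2 * exp (3 + 3 * B0) / A * P.
  apply: Rmult_le_pos; last lra.
  apply: Rmult_le_pos; [have := exp_pos (3 + 3 * B0); lra | apply: Rlt_le; apply: Rinv_0_lt_compat; lra].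
have hF2 : 2 * exp (3 + 3 * B0) / A * P * fsum K (pow qg) <= 2 * exp (3 + 3 * B0) / A * P * / (1 - qg) := Rmult_le_compat_l _ _ _ hPp hG.
have tot : exc_sum dlt A x <= C1 / A * P.
  rewrite /C1; rewrite /Rdiv in dR' hF hF2 hPp *.
  have : exp (1 + B0) = exp (- (- 1 - B0)) by f_equal; ring.
  move=> e; rewrite e.
  lra.
apply: Rle_trans tot _.
have : 0 <= C1 / A by apply: Rmult_le_pos; [lra | apply: Rlt_le; apply: Rinv_0_lt_compat; lra].
move=> h; have := Rmult_le_compat_l _ _ _ h hPx.
move=> h2; apply: Rle_trans h2 _; right; field; lra.
Qed.
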